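(* Let $4\le k\le\infty$ and let $\Gamma$ be a graph whose maximal cliques (with respect to inclusion) pairwise intersect in at most a vertex. Let $V$ and $M$ be the sets of vertices and of maximal cliques of $\Gamma$, and let $\Gamma^*$ be the graph with vertex set $V\cup M$ in which: $v,v'\in V$ are adjacent iff they are adjacent in $\Gamma$; $m,m'\in M$ are adjacent iff $m\cap m'\neq\emptyset$; and $v\in V$, $m\in M$ are adjacent iff $v\in m$. Then the flag complex spanned on $\Gamma^*$ is $k$-large if and only if the flag complex spanned on $\Gamma$ is $k$-large.
   Context: The flag complex spanned on a graph has a simplex for each finite clique. A cycle is a subcomplex that is a subdivision of the circle; it is full if every simplex spanned by its vertices lies in it. A flag complex is $k$-large if it has no full cycle of length $<k$. *)

(* Defs.v *)
From Stdlib Require Import List Arith PeanoNat.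
Import ListNotations.

(* A simple graph is a symmetric irreflexive relation [adj] on a type [T]. *)

Definition clique {T : Type} (adj : T -> T -> Prop) (C : T -> Prop) : Prop :=
  forall x y, C x -> C y -> x <> y -> adj x y.

Definition max_clique {T : Type} (adj : T -> T -> Prop) (C : T -> Prop) : Prop :=
  clique adj C /\
  forall D : T -> Prop, clique adj D -> (forall x, C x -> D x) -> forall x, D x -> C x.

(* Simplices of the flag complex: finite cliques, given by a finite list of vertices. *)
Definition flag_simplex {T : Type} (adj : T -> T -> Prop) (s : list T) : Prop :=
  forall x y, In x s -> In y s -> x <> y -> adj x y.

(* A cycle of length n (n >= 3) in the flag complex: distinct vertices
   f 0, ..., f (n-1), with edges {f i, f (i+1 mod n)}; the subcomplex consists of
   these vertices and edges.  It is full if every simplex of the flag complex spanned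
   by its vertices belongs to it, i.e. is (empty or) a vertex or one of the edges. *)
Definition full_cycle {T : Type} (adj : T -> T -> Prop) (n : nat) (f : nat -> T) : Prop :=
  3 <= n /\
  (forall i j, i < n -> j < n -> f i = f j -> i = j) /\
  (forall i, i < n -> adj (f i) (f ((i + 1) mod n))) /\
  (forall s : list T, flag_simplex adj s ->
     (forall x, In x s -> exists i, i < n /\ x = f i) ->
     (forall x y, In x s -> In y s -> x = y) \/
     (exists i, i < n /\ forall x, In x s <-> (x = f i \/ x = f ((i + 1) mod n)))).

(* k ranges over nat extended with infinity: [None] = infinity. *)
Definition lt_inf (n : nat) (k : option nat) : Prop :=
  match k with Some k => n < k | None => True end.

Definition le_inf (m : nat) (k : option nat) : Prop :=
  match k with Some k => m <= k | None => True end.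

Definition k_large {T : Type} (adj : T -> T -> Prop) (k : option nat) : Prop :=
  forall n f, full_cycle adj n f -> ~ lt_inf n k.

Definition max_cliques_meet_in_at_most_a_vertex {T : Type} (adj : T -> T -> Prop) : Prop :=
  forall m m' : T -> Prop, max_clique adj m -> max_clique adj m' -> m <> m' ->
  forall x y, m x -> m' x -> m y -> m' y -> x = y.

Definition star_vertex {T : Type} (adj : T -> T -> Prop) : Type :=
  (T + { m : T -> Prop | max_clique adj m })%type.

Definition star_adj {T : Type} (adj : T -> T -> Prop) :
  star_vertex adj -> star_vertex adj -> Prop :=
  fun a b =>
    match a, b with
    | inl v, inl v' => adj v v'
    | inl v, inr m => proj1_sig m v
    | inr m, inl v => proj1_sig m v
    | inr m, inr m' => proj1_sig m <> proj1_sig m' /\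
                       exists x, proj1_sig m x /\ proj1_sig m' x
    end.

(* Main.v *)
Require Import Defs.
From Stdlib Require Import List Arith PeanoNat Lia Classical ClassicalEpsilon FunctionalExtensionality PropExtensionality.
Import ListNotations.


Definition nxt (n i j : nat) : Prop := (j = i + 1 /\ j < n) \/ (j = 0 /\ i + 1 = n).

Definition cyc {T} (adj : T -> T -> Prop) n (f : nat -> T) :=
  3 <= n /\ (forall i j, i < n -> j < n -> f i = f j -> i = j) /\
  (forall i j, i < n -> nxt n i j -> adj (f i) (f j)).

Definition simp_ok {T} (adj : T -> T -> Prop) n (f : nat -> T) :=
  forall s, flag_simplex adj s -> (forall x, In x s -> exists i, i < n /\ x = f i) ->
  (forall x y, In x s -> In y s -> x = y) \/
  (exists i j, i < n /\ nxt n i j /\ forall x, In x s <-> x = f i \/ x = f j).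

Definition full {T} (adj : T -> T -> Prop) n f := cyc adj n f /\ simp_ok adj n f.

Lemma mod_nxt n i : i < n -> nxt n i ((i+1) mod n).
Proof.
  intros H. destruct (Nat.eq_dec (i+1) n) as [E|E].
  - right. rewrite E, Nat.Div0.mod_same by lia. lia.
  - left. rewrite Nat.mod_small by lia. lia.
Qed.

Lemma nxt_mod n i j : nxt n i j -> (i+1) mod n = j.
Proof.
  intros [[-> H]|[-> H]]. - apply Nat.mod_small; lia. - rewrite H; apply Nat.Div0.mod_same; lia.
Qed.

Lemma nxt_lt n i j : nxt n i j -> j < n.
Proof. unfold nxt; lia. Qed.

Lemma full_iff {T} (adj : T -> T -> Prop) n f : full_cycle adj n f <-> full adj n f.
Proof.
  split.
  - intros (H3 & Hi & Ha & Hs). split; [split; [exact H3|split; [exact Hi|]]|].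
    + intros i j Hi' Hn. rewrite <- (nxt_mod _ _ _ Hn). apply Ha; auto.
    + intros s Hf Hin. destruct (Hs s Hf Hin) as [L|[i [Hi' R]]]; [now left|right].
      exists i, ((i+1) mod n). split; [auto|split; [apply mod_nxt; auto|auto]].
  - intros [(H3 & Hi & Ha) Hs]. split; [exact H3|split; [exact Hi|split]].
    + intros i Hi'. apply Ha; auto. apply mod_nxt; auto.
    + intros s Hf Hin. destruct (Hs s Hf Hin) as [L|[i [j [Hi' [Hn R]]]]]; [now left|right].
      exists i. split; auto. rewrite (nxt_mod _ _ _ Hn). auto.
Qed.

Lemma full_adj {T} (adj : T -> T -> Prop) n f (hsym : forall x y, adj x y -> adj y x)
  (hirr : forall x, ~ adj x x) :
  full adj n f -> forall a b, a < n -> b < n -> adj (f a) (f b) -> nxt n a b \/ nxt n b a.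
Proof.
  intros [(H3 & Hi & Ha) Hs] a b Ha' Hb' Hab.
  assert (Hfl : flag_simplex adj [f a; f b]).
  { intros x y [<-|[<-|[]]] [<-|[<-|[]]] Hxy; try (exfalso; apply Hxy; reflexivity); auto. }
  assert (Hne : f a <> f b) by (intro E; rewrite E in Hab; exact (hirr _ Hab)).
  destruct (Hs _ Hfl) as [L|[i [j [Hi' [Hn R]]]]].
  - intros x [<-|[<-|[]]]; eauto.
  - exfalso. apply Hne, L; simpl; auto.
  - assert (Hj : j < n) by (eapply nxt_lt; eauto).
    destruct (proj1 (R (f a)) (or_introl eq_refl)) as [E1|E1];
    destruct (proj1 (R (f b)) (or_intror (or_introl eq_refl))) as [E2|E2];
    apply Hi in E1; apply Hi in E2; auto; subst; try tauto.
Qed.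

Lemma full_no2 {T} (adj : T -> T -> Prop) n f (hsym : forall x y, adj x y -> adj y x)
  (hirr : forall x, ~ adj x x) : 4 <= n ->
  full adj n f -> forall a b, a < n -> b < n -> (b = a + 2 \/ b + n = a + 2) -> ~ adj (f a) (f b).
Proof.
  intros H4 Hf a b Ha Hb Hd Hab. destruct (full_adj adj n f hsym hirr Hf a b Ha Hb Hab);
  unfold nxt in *; lia.
Qed.

Lemma full_ge4 {T} (adj : T -> T -> Prop) n f (hsym : forall x y, adj x y -> adj y x) :
  full adj n f -> 4 <= n.
Proof.
  intros [(H3 & Hi & Ha) Hs].
  destruct (Nat.eq_dec n 3) as [E|E]; [|lia]. subst n. exfalso.
  assert (A01 : adj (f 0) (f 1)) by (apply Ha; unfold nxt; lia).
  assert (A12 : adj (f 1) (f 2)) by (apply Ha; unfold nxt; lia).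
  assert (A20 : adj (f 2) (f 0)) by (apply Ha; unfold nxt; lia).
  assert (Hfl : flag_simplex adj [f 0; f 1; f 2]).
  { intros x y [<-|[<-|[<-|[]]]] [<-|[<-|[<-|[]]]] Hxy; try (exfalso; apply Hxy; reflexivity); auto. }
  destruct (Hs _ Hfl) as [L|[i [j [Hi' [Hn R]]]]].
  - intros x [<-|[<-|[<-|[]]]]; [exists 0|exists 1|exists 2]; split; auto; lia.
  - assert (f 0 = f 1) by (apply L; simpl; auto). apply Hi in H; lia.
  - assert (Hj : j < 3) by (eapply nxt_lt; eauto).
    destruct (proj1 (R (f 0)) ltac:(simpl; auto)) as [E1|E1];
    destruct (proj1 (R (f 1)) ltac:(simpl; auto)) as [E2|E2];
    destruct (proj1 (R (f 2)) ltac:(simpl; auto)) as [E3|E3];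
    apply Hi in E1; try lia; apply Hi in E2; try lia; apply Hi in E3; lia.
Qed.

Lemma chordless_full {T} (adj : T -> T -> Prop) n f :
  cyc adj n f -> 4 <= n ->
  (forall a b, a < n -> b < n -> adj (f a) (f b) -> nxt n a b \/ nxt n b a) -> full adj n f.
Proof.
  intros Hc H4 Hch. split; [exact Hc|]. destruct Hc as (H3 & Hi & Ha).
  intros s Hfl Hin.
  destruct (classic (forall x y, In x s -> In y s -> x = y)) as [L|L]; [now left|right].
  apply not_all_ex_not in L as [x L]. apply not_all_ex_not in L as [y L].
  apply imply_to_and in L as [Hx L]. apply imply_to_and in L as [Hy Hxy].
  destruct (Hin x Hx) as [a [Ha' ->]]. destruct (Hin y Hy) as [b [Hb' ->]].
  assert (Hab : adj (f a) (f b)) by (apply Hfl; auto).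
  assert (Hcase : forall a b, a < n -> b < n -> In (f a) s -> In (f b) s -> nxt n a b ->
    exists i j, i < n /\ nxt n i j /\ forall x, In x s <-> x = f i \/ x = f j).
  { clear a b Ha' Hb' Hx Hy Hxy Hab. intros a b Ha' Hb' Hx Hy Hn. exists a, b.
    split; [auto|split; [auto|]]. intros z; split; [|intros [->| ->]; auto].
    intros Hz. destruct (Hin z Hz) as [c [Hc' ->]].
    destruct (classic (f c = f a)) as [E|E]; [now left|].
    destruct (classic (f c = f b)) as [E'|E']; [now right|exfalso].
    assert (c <> a) by (intro; subst; auto). assert (c <> b) by (intro; subst; auto).
    assert (a <> b) by (unfold nxt in *; lia).
    assert (X1 := Hch c a Hc' Ha' (Hfl _ _ Hz Hx E)).
    assert (X2 := Hch c b Hc' Hb' (Hfl _ _ Hz Hy E')).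
    unfold nxt in *; lia. }
  destruct (Hch a b Ha' Hb' Hab) as [N|N]; [apply Hcase with a b|destruct (Hcase b a)]; auto.
  - destruct H as [j [X [Y Z]]]. exists x, j. auto.
Qed.

Lemma ex_min (P : nat -> Prop) : (exists d, P d) -> exists d, P d /\ forall e, e < d -> ~ P e.
Proof.
  intros [d Hd]. induction d as [d IH] using lt_wf_ind.
  destruct (classic (exists e, e < d /\ P e)) as [[e [He Pe]]|N].
  - exact (IH e He Pe).
  - exists d. split; auto. intros e He Pe. apply N; eauto.
Qed.

Lemma chord_lemma {T} (adj : T -> T -> Prop) n f (hsym : forall x y, adj x y -> adj y x)
  (hirr : forall x, ~ adj x x) : cyc adj n f ->
  (exists n' i, 4 <= n' /\ i + n' <= n /\ full adj n' (fun t => f (i + t))) \/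
  (exists a b, a < n /\ b < n /\ (b = a + 2 \/ b + n = a + 2) /\ adj (f a) (f b)).
Proof.
  intros Hc. pose proof Hc as (H3 & Hi & Ha).
  set (chord := fun d => exists a, a + d < n /\ 2 <= d /\ ~ (a = 0 /\ a + d = n - 1) /\
                                 adj (f a) (f (a + d))).
  destruct (classic (exists d, chord d)) as [Ex|Nex].
  - destruct (ex_min _ Ex) as [d [[a (Hd1 & Hd2 & Hd3 & Hd4)] Hmin]].
    destruct (Nat.eq_dec d 2) as [E|E].
    + right. exists a, (a + d). split; [lia|split; [lia|split; [lia|auto]]].
    + left. exists (d + 1), a. split; [lia|split; [lia|]].
      assert (Hc' : cyc adj (d + 1) (fun t => f (a + t))).
      { split; [lia|split].
        - intros i j Hi' Hj' E'. apply Hi in E'; lia.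
        - intros i j Hi' [[-> Hj]|[-> Hj]].
          + apply Ha; [lia|]. replace (a + (i + 1)) with (a + i + 1) by lia. left; lia.
          + replace (a + i) with (a + d) by lia. replace (a + 0) with a by lia. auto. }
      apply chordless_full; [exact Hc'|lia|].
      intros t1 t2 Ht1 Ht2 Hadj.
      destruct (lt_eq_lt_dec t1 t2) as [[Lt|Eq]|Gt].
      * destruct (classic (t2 = t1 + 1 \/ (t1 = 0 /\ t2 = d))) as [O|O]; [unfold nxt; lia|].
        exfalso. apply (Hmin (t2 - t1)); [lia|]. exists (a + t1).
        split; [lia|split; [lia|split; [lia|]]].
        replace (a + t1 + (t2 - t1)) with (a + t2) by lia. auto.
      * subst. exfalso; exact (hirr _ Hadj).
      * destruct (classic (t1 = t2 + 1 \/ (t2 = 0 /\ t1 = d))) as [O|O]; [unfold nxt; lia|].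
        exfalso. apply (Hmin (t1 - t2)); [lia|]. exists (a + t2).
        split; [lia|split; [lia|split; [lia|]]].
        replace (a + t2 + (t1 - t2)) with (a + t1) by lia. auto.
  - destruct (Nat.eq_dec n 3) as [E|E].
    + right. subst n. exists 0, 2. split; [lia|split; [lia|split; [lia|]]].
      apply hsym, Ha; unfold nxt; lia.
    + left. exists n, 0. split; [lia|split; [lia|]]. simpl.
      apply chordless_full; [exact Hc|lia|].
      intros t1 t2 Ht1 Ht2 Hadj.
      destruct (lt_eq_lt_dec t1 t2) as [[Lt|Eq]|Gt].
      * destruct (classic (t2 = t1 + 1 \/ (t1 = 0 /\ t2 = n - 1))) as [O|O]; [unfold nxt; lia|].
        exfalso. apply Nex. exists (t2 - t1), t1.
        split; [lia|split; [lia|split; [lia|]]].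
        replace (t1 + (t2 - t1)) with t2 by lia. auto.
      * subst. exfalso; exact (hirr _ Hadj).
      * destruct (classic (t1 = t2 + 1 \/ (t2 = 0 /\ t1 = n - 1))) as [O|O]; [unfold nxt; lia|].
        exfalso. apply Nex. exists (t1 - t2), t2.
        split; [lia|split; [lia|split; [lia|]]].
        replace (t2 + (t1 - t2)) with t1 by lia. apply hsym; auto.
Qed.

Fixpoint cnt (h : nat -> bool) n := match n with 0 => 0 | S n => cnt h n + (if h n then 1 else 0) end.

Lemma cnt_ext h h' n : (forall t, t < n -> h t = h' t) -> cnt h n = cnt h' n.
Proof. induction n; simpl; intros H; auto. rewrite IHn, H; auto. Qed.

Lemma cnt_add h a b : cnt h (a + b) = cnt h a + cnt (fun t => h (a + t)) b.
Proof. induction b; simpl. - rewrite Nat.add_0_r; auto. - rewrite Nat.add_succ_r; simpl; lia. Qed.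

Lemma cnt_pos h n t : t < n -> h t = true -> 1 <= cnt h n.
Proof.
  induction n; intros H1 H2; simpl; [lia|].
  destruct (Nat.eq_dec t n) as [->|Ne]; [rewrite H2; lia|]. specialize (IHn ltac:(lia) H2); lia.
Qed.

Lemma cnt_le_shift h i n' n : i + n' <= n -> cnt (fun t => h (i + t)) n' <= cnt h n.
Proof. intros H. replace n with (i + n' + (n - i - n')) by lia. rewrite !cnt_add. lia. Qed.

Lemma cnt_change h h' n p : p < n -> h p = true -> h' p = false ->
  (forall t, t < n -> t <> p -> h t = h' t) -> cnt h' n < cnt h n.
Proof.
  induction n; intros Hp E1 E2 Ho; [lia|]. simpl.
  destruct (Nat.eq_dec p n) as [->|Ne].
  - rewrite E1, E2. rewrite (cnt_ext h' h n); [lia|]. intros t Ht; symmetry; apply Ho; lia.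
  - rewrite Ho by lia. specialize (IHn ltac:(lia) E1 E2 ltac:(intros; apply Ho; lia)). lia.
Qed.

Definition pos n i t := if i + t <? n then i + t else i + t - n.

Ltac posl := unfold pos in *; repeat match goal with
  | |- context [?a <? ?b] => destruct (Nat.ltb_spec a b)
  | H : context [?a <? ?b] |- _ => destruct (Nat.ltb_spec a b) end; unfold nxt in *; lia.

Lemma cnt_rot h n i : i < n -> cnt (fun t => h (pos n i t)) n = cnt h n.
Proof.
  intros Hi. set (h' := fun t => h (pos n i t)).
  assert (E1 : cnt h' n = cnt h' ((n - i) + i)) by (f_equal; lia).
  assert (E2 : cnt h n = cnt h (i + (n - i))) by (f_equal; lia).
  rewrite E1, E2, !cnt_add.
  rewrite (cnt_ext h' (fun t => h (i + t)) (n - i)).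
  2:{ intros t Ht. unfold h'. f_equal. posl. }
  rewrite (cnt_ext (fun t => h' (n - i + t)) h i).
  2:{ intros t Ht. unfold h'. f_equal. posl. }
  lia.
Qed.

Lemma full_rot {T} (adj : T -> T -> Prop) n f i : i < n -> full adj n f ->
  full adj n (fun t => f (pos n i t)).
Proof.
  intros Hi [(H3 & Hinj & Ha) Hs]. split; [split; [auto|split]|].
  - intros a b Ha' Hb' E. apply Hinj in E; posl.
  - intros a b Ha' Hn. apply Ha; posl.
  - intros s Hfl Hin.
    destruct (Hs s Hfl) as [L|[a [b [Ha' [Hn R]]]]].
    + intros x Hx. destruct (Hin x Hx) as [t [Ht ->]]. exists (pos n i t). split; [posl|auto].
    + now left.
    + right. set (q := fun c => if i <=? c then c - i else c + n - i).
      assert (Hq : forall c, c < n -> q c < n /\ pos n i (q c) = c).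
      { intros c Hc. unfold q. destruct (Nat.leb_spec i c); split; posl. }
      destruct (Hq a Ha') as [Q1 Q2]. assert (Hb' : b < n) by (eapply nxt_lt; eauto).
      destruct (Hq b Hb') as [Q3 Q4].
      exists (q a), (q b). split; [auto|split].
      * rewrite <- Q2, <- Q4 in Hn. clear -Hn Q1 Q3 Hi. posl.
      * rewrite Q2, Q4. auto.
Qed.

Definition sub {T} (X Y : T -> Prop) := forall z, X z -> Y z.
Definition addp {T} (X : T -> Prop) y := fun z => X z \/ z = y.
Definition ech {T} (adj : T -> T -> Prop) (i : inhabited T) (X : T -> Prop) :=
  epsilon i (fun y => ~ X y /\ clique adj (addp X y)).
Definition gsucc {T} adj i (X : T -> Prop) :=
  fun z => X z \/ (z = ech adj i X /\ clique adj (addp X (ech adj i X))).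
Definition supf {T} (C : T -> Prop) (F : (T -> Prop) -> Prop) :=
  fun z => C z \/ exists X, F X /\ X z.

Inductive tower {T} adj i (C : T -> Prop) : (T -> Prop) -> Prop :=
| tw_s X : tower adj i C X -> tower adj i C (gsucc adj i X)
| tw_u F : (forall X, F X -> tower adj i C X) -> tower adj i C (supf C F).

Lemma set_eq {T} (X Y : T -> Prop) : sub X Y -> sub Y X -> X = Y.
Proof.
  intros H1 H2. apply functional_extensionality; intros z.
  apply propositional_extensionality; split; auto.
Qed.

Lemma g_ext {T} adj i (X : T -> Prop) : sub X (gsucc adj i X).
Proof. intros z H; left; auto. Qed.

Lemma tower_C {T} adj i (C : T -> Prop) X : tower adj i C X -> sub C X.
Proof.
  induction 1 as [X _ IH|F _ IH]; intros z Hz. - left; auto. - left; auto.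
Qed.

Definition extreme {T} adj i (C : T -> Prop) c :=
  tower adj i C c /\ forall x, tower adj i C x -> sub x c -> ~ sub c x -> sub (gsucc adj i x) c.

Lemma lemma1 {T} adj i (C : T -> Prop) c : extreme adj i C c ->
  forall x, tower adj i C x -> sub x c \/ sub (gsucc adj i c) x.
Proof.
  intros [Tc Ec]. induction 1 as [x Tx IH|F HF IH].
  - destruct IH as [S|S].
    + destruct (classic (sub c x)) as [S'|S'].
      * right. rewrite (set_eq _ _ S S'). intros z; auto.
      * left. apply Ec; auto.
    + right. intros z Hz. apply g_ext; auto.
  - destruct (classic (exists X, F X /\ sub (gsucc adj i c) X)) as [[X [FX S]]|N].
    + right. intros z Hz. right. exists X; auto.
    + left. intros z [Hz|[X [FX Hz]]].
      * apply (tower_C _ _ _ _ Tc); auto.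
      * destruct (IH X FX) as [S|S]; auto. exfalso; apply N; eauto.
Qed.

Lemma lemma2 {T} adj i (C : T -> Prop) c : tower adj i C c -> extreme adj i C c.
Proof.
  induction 1 as [c Tc IH|F HF IH].
  - split; [constructor; auto|]. intros x Tx S NS.
    destruct (lemma1 _ _ _ _ IH x Tx) as [S'|S']; [|contradiction].
    destruct (classic (sub c x)) as [S2|S2].
    + rewrite (set_eq _ _ S' S2). intros z; auto.
    + intros z Hz. apply g_ext. apply (proj2 IH x Tx S' S2); auto.
  - split; [constructor; auto|]. intros x Tx S NS.
    destruct (classic (exists d, F d /\ sub x d /\ ~ sub d x)) as [[d (Fd & S1 & S2)]|N].
    + intros z Hz. right. exists d. split; auto. apply (proj2 (IH d Fd) x Tx S1 S2); auto.
    + exfalso. apply NS. intros z [Hz|[d [Fd Hz]]].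
      * apply (tower_C _ _ _ _ Tx); auto.
      * destruct (lemma1 _ _ _ _ (IH d Fd) x Tx) as [S'|S'].
        -- destruct (classic (sub d x)) as [S2|S2]; auto. exfalso; apply N; eauto.
        -- apply S'. apply g_ext; auto.
Qed.

Lemma tower_chain {T} adj i (C : T -> Prop) x y : tower adj i C x -> tower adj i C y ->
  sub x y \/ sub y x.
Proof.
  intros Tx Ty. destruct (lemma1 _ _ _ _ (lemma2 _ _ _ _ Ty) x Tx) as [S|S]; auto.
  right. intros z Hz; apply S, g_ext; auto.
Qed.

Lemma tower_clique {T} adj i (C : T -> Prop) : clique adj C ->
  forall X, tower adj i C X -> clique adj X.
Proof.
  intros HC X TX. induction TX as [X Tx IH|F HF IH].
  - intros x y [Hx|[-> Hc]] [Hy|[-> Hc']] Hxy.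
    + apply IH; auto.
    + apply Hc'; [left; auto|right; auto|auto].
    + apply Hc; [right; auto|left; auto|auto].
    + exfalso; auto.
  - intros x y [Hx|[X1 [F1 Hx]]] [Hy|[X2 [F2 Hy]]] Hxy.
    + apply HC; auto.
    + apply (IH X2 F2); auto. apply (tower_C _ _ _ _ (HF X2 F2)); auto.
    + apply (IH X1 F1); auto. apply (tower_C _ _ _ _ (HF X1 F1)); auto.
    + destruct (tower_chain _ _ _ _ _ (HF X1 F1) (HF X2 F2)) as [S|S].
      * apply (IH X2 F2); auto.
      * apply (IH X1 F1); auto.
Qed.

Lemma zorn_clique {T} (adj : T -> T -> Prop) (C : T -> Prop) (c0 : T) :
  clique adj C -> exists M, max_clique adj M /\ sub C M.
Proof.
  intros HC. set (i := inhabits c0). set (U := supf C (tower adj i C)).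
  assert (TU : tower adj i C U) by (constructor; auto).
  assert (SU : sub (gsucc adj i U) U).
  { intros z Hz. right. exists (gsucc adj i U). split; auto. constructor; auto. }
  exists U. split; [split|].
  - apply (tower_clique adj i C HC); auto.
  - intros D HD SD z Dz. apply NNPP; intros NU.
    assert (Ex : exists y, ~ U y /\ clique adj (addp U y)).
    { exists z. split; auto. intros a b Ha Hb Hab. apply HD; auto.
      - destruct Ha as [Ha| ->]; auto.
      - destruct Hb as [Hb| ->]; auto. }
    pose proof (epsilon_spec i _ Ex) as [E1 E2].
    apply E1. apply SU. right. split; auto.
  - intros z Hz. left; auto.
Qed.

Lemma tri {V} (adj : V -> V -> Prop) (hsym : forall x y, adj x y -> adj y x)
  (hmeet : max_cliques_meet_in_at_most_a_vertex adj) (A : V -> Prop) a b c :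
  max_clique adj A -> A a -> A b -> a <> b -> adj c a -> adj c b -> A c.
Proof.
  intros HA Aa Ab Nab Hca Hcb.
  set (C := fun z => z = a \/ z = b \/ z = c).
  assert (HC : clique adj C).
  { intros x y Hx Hy Hxy. unfold C in *.
    destruct Hx as [->|[->| ->]]; destruct Hy as [->|[->| ->]]; try (exfalso; apply Hxy; reflexivity);
    auto; try (apply (proj1 HA); auto). }
  destruct (zorn_clique adj C a HC) as [M [HM SM]].
  apply NNPP; intros NA.
  assert (M <> A) by (intros ->; apply NA, SM; unfold C; auto).
  apply Nab. apply (hmeet M A HM HA H); auto; apply SM; unfold C; auto.
Qed.

Lemma sig_eq {V} (adj : V -> V -> Prop) (m m' : {m | max_clique adj m}) :
  proj1_sig m = proj1_sig m' -> m = m'.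
Proof. destruct m, m'; simpl; intros ->; f_equal; apply proof_irrelevance. Qed.

Lemma share {V} (adj : V -> V -> Prop) (A B : {m | max_clique adj m}) x :
  A <> B -> proj1_sig A x -> proj1_sig B x -> star_adj adj (inr A) (inr B).
Proof. intros N HA HB. simpl. split; [intros E; apply N, sig_eq, E|eauto]. Qed.

Lemma sadj_sym {V} (adj : V -> V -> Prop) (hsym : forall x y, adj x y -> adj y x) x y :
  star_adj adj x y -> star_adj adj y x.
Proof.
  destruct x, y; simpl; auto. intros [N [z [H1 H2]]]. split; eauto.
Qed.

Lemma sadj_irr {V} (adj : V -> V -> Prop) (hirr : forall x, ~ adj x x) x : ~ star_adj adj x x.
Proof. destruct x; simpl; auto. intros [N _]; auto. Qed.

Definition isM {V} {adj : V -> V -> Prop} (z : star_vertex adj) : bool :=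
  match z with inl _ => false | inr _ => true end.

Ltac gsimp := repeat match goal with
  | |- context [?a =? ?b] => destruct (Nat.eqb_spec a b)
  | H : context [?a =? ?b] |- _ => destruct (Nat.eqb_spec a b) end.

Definition redconcl {V} (adj : V -> V -> Prop) n (f : nat -> star_vertex adj) :=
  exists n'' g, n'' <= n /\ cyc (star_adj adj) n'' g /\
  (forall a b, a < n'' -> b < n'' -> (b = a + 2 \/ b + n'' = a + 2) -> ~ star_adj adj (g a) (g b)) /\
  cnt (fun t => isM (g t)) n'' < cnt (fun t => isM (f t)) n.

Lemma mixed0 {V} (adj : V -> V -> Prop) (hsym : forall x y, adj x y -> adj y x)
  (hirr : forall x, ~ adj x x) (hmeet : max_cliques_meet_in_at_most_a_vertex adj)
  n f u m1 : full (star_adj adj) n f -> f 0 = inl u -> f 1 = inr m1 -> redconcl adj n f.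
Proof.
  intros Hf F0 F1.
  pose proof (full_ge4 _ _ _ (sadj_sym adj hsym) Hf) as H4.
  pose proof (full_adj _ n f (sadj_sym adj hsym) (sadj_irr adj hirr) Hf) as NA.
  pose proof (full_no2 _ n f (sadj_sym adj hsym) (sadj_irr adj hirr) H4 Hf) as N2.
  destruct Hf as [[_ [Hi Ha]] _].
  assert (A01 := Ha 0 1 ltac:(lia) ltac:(unfold nxt; lia)). rewrite F0, F1 in A01; simpl in A01.
  assert (A12 := Ha 1 2 ltac:(lia) ltac:(unfold nxt; lia)). rewrite F1 in A12.
  assert (N02 := N2 0 2 ltac:(lia) ltac:(lia) ltac:(lia)). rewrite F0 in N02.
  assert (Cm1 : clique adj (proj1_sig m1)) by exact (proj1 (proj2_sig m1)).
  destruct (f 2) as [w|m2] eqn:F2.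
  { exfalso. simpl in A12. apply N02. simpl. apply Cm1; auto.
    intros ->. rewrite <- F0 in F2. apply Hi in F2; lia. }
  destruct A12 as [Nm12 [x1 [X1 X2]]].
  assert (Cm2 : clique adj (proj1_sig m2)) by exact (proj1 (proj2_sig m2)).
  assert (Um2 : ~ proj1_sig m2 u) by (intros H; apply N02; exact H).
  assert (Nux : u <> x1) by (intros ->; auto).
  assert (Aux : adj u x1) by (apply Cm1; auto).
  assert (Hxpos : forall b, b < n -> f b = inl x1 -> False).
  { intros b Hb Fb.
    assert (E1 : star_adj adj (f b) (f 1)) by (rewrite Fb, F1; exact X1).
    assert (E2 : star_adj adj (f b) (f 2)) by (rewrite Fb, F2; exact X2).
    apply NA in E1; try lia. apply NA in E2; try lia. unfold nxt in *; lia. }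
  assert (Hlast : ~ star_adj adj (f (n - 1)) (inl x1)).
  { intros Hc. assert (Ap := Ha (n - 1) 0 ltac:(lia) ltac:(unfold nxt; lia)).
    assert (Nl := N2 (n - 1) 1 ltac:(lia) ltac:(lia) ltac:(lia)).
    rewrite F0 in Ap. rewrite F1 in Nl.
    destruct (f (n - 1)) as [t|m0] eqn:Fl; simpl in Hc, Ap, Nl.
    - apply Nl. apply (tri adj hsym hmeet _ u x1 t (proj2_sig m1)); auto.
    - apply Nl. apply (share adj m0 m1 x1); auto.
      intros ->. rewrite <- F1 in Fl. apply Hi in Fl; lia. }
  destruct (f 3) as [w|m3] eqn:F3.
  -
    assert (A23 := Ha 2 3 ltac:(lia) ltac:(unfold nxt; lia)). rewrite F2, F3 in A23; simpl in A23.
    assert (N13 := N2 1 3 ltac:(lia) ltac:(lia) ltac:(lia)). rewrite F1, F3 in N13; simpl in N13.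
    assert (Nxw : x1 <> w) by (intros ->; auto).
    assert (Axw : adj x1 w) by (apply Cm2; auto).
    assert (Wm1 : adj w u -> False).
    { intros Awu. apply N13. apply (tri adj hsym hmeet _ u x1 w (proj2_sig m1)); auto. }
    exists (n - 1), (fun t => if t =? 1 then inl x1 else if t =? 0 then f 0 else f (t + 1)).
    split; [lia|split; [split; [lia|split]|split]].
    + intros a b Ha' Hb' E. gsimp; subst; try lia.
      * exfalso; apply (Hxpos 0); auto; lia.
      * exfalso; apply (Hxpos (b + 1)); auto; lia.
      * exfalso; apply (Hxpos 0); auto; lia.
      * apply Hi in E; lia.
      * exfalso; apply (Hxpos (a + 1)); auto; lia.
      * apply Hi in E; lia.
      * apply Hi in E; lia.
    + intros a b Ha' Hn. gsimp; subst; try (unfold nxt in *; lia).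
      all: first [ replace (b + 1) with 3 by (unfold nxt in *; lia); rewrite F3; exact Axw
                 | rewrite F0; exact Aux | apply Ha; unfold nxt in *; lia ].
    + intros a b Ha' Hb' Hd Hc. gsimp; subst; try lia.
      all: first [
          rewrite F0 in Hc; assert (A30 := Ha 3 0 ltac:(lia) ltac:(unfold nxt; lia));
          rewrite F3, F0 in A30; exact (Wm1 A30)
        | replace (b + 1) with 3 in Hc by lia; rewrite F0, F3 in Hc; exact (Wm1 (hsym _ _ Hc))
        | replace (a + 1) with (n - 1) in Hc by lia; exact (Hlast Hc)
        | eapply N2; [| | |exact Hc]; lia
        | replace (b + 1) with 4 in Hc by lia;
          assert (A34 := Ha 3 4 ltac:(lia) ltac:(unfold nxt; lia));
          assert (N24 := N2 2 4 ltac:(lia) ltac:(lia) ltac:(lia));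
          rewrite F3 in A34; rewrite F2 in N24;
          destruct (f 4) as [s0|m4] eqn:F4; simpl in Hc, A34, N24;
          [ apply N24; apply (tri adj hsym hmeet _ x1 w s0 (proj2_sig m2)); auto
          | apply N24; apply (share adj m2 m4 x1); auto; intros ->; rewrite <- F2 in F4;
            apply Hi in F4; lia ] ].
    + set (g := fun t => if t =? 1 then inl x1 else if t =? 0 then f 0 else f (t + 1)).
      change (cnt (fun t => isM (g t)) (n - 1) < cnt (fun t => isM (f t)) n).
      assert (E1 : cnt (fun t => isM (f t)) n = cnt (fun t => isM (f t)) (3 + (n - 3))) by (f_equal; lia).
      assert (E2 : cnt (fun t => isM (g t)) (n - 1) = cnt (fun t => isM (g t)) (2 + (n - 3))) by (f_equal; lia).
      rewrite E1, E2, !cnt_add.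
      rewrite (cnt_ext (fun t => isM (g (2 + t))) (fun t => isM (f (3 + t))) (n - 3)).
      2:{ intros t Ht. unfold g. simpl. do 3 f_equal. lia. }
      unfold g; simpl. rewrite F0, F1, F2. simpl. lia.
  - assert (N13 := N2 1 3 ltac:(lia) ltac:(lia) ltac:(lia)).
    exists n, (fun t => if t =? 1 then inl x1 else f t).
    split; [lia|split; [split; [lia|split]|split]].
    + intros a b Ha' Hb' E. gsimp; subst; try lia.
      * exfalso; apply (Hxpos b); auto.
      * exfalso; apply (Hxpos a); auto.
      * apply Hi in E; lia.
    + intros a b Ha' Hn. gsimp; subst; try (unfold nxt in *; lia).
      all: first [ replace b with 2 by (unfold nxt in *; lia); rewrite F2; exact X2
                 | replace a with 0 by (unfold nxt in *; lia); rewrite F0; exact Aux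
                 | apply Ha; unfold nxt in *; lia ].
    + intros a b Ha' Hb' Hd Hc. gsimp; subst; try lia.
      all: first [
          replace b with 3 in Hc by lia; rewrite F3 in Hc; simpl in Hc; apply N13;
          rewrite F1, F3; apply (share adj m1 m3 x1); auto; intros ->;
          rewrite <- F1 in F3; apply Hi in F3; lia
        | replace a with (n - 1) in Hc by lia; exact (Hlast Hc)
        | eapply N2; [| | |exact Hc]; lia ].
    + apply (cnt_change _ _ n 1); [lia|rewrite F1; reflexivity|reflexivity|].
      intros t Ht Nt. destruct (Nat.eqb_spec t 1); [lia|reflexivity].
Qed.

Lemma cnt_false n : cnt (fun _ => false) n = 0.
Proof. induction n; simpl; lia. Qed.

Lemma allM {V} (adj : V -> V -> Prop) (hsym : forall x y, adj x y -> adj y x)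
  (hirr : forall x, ~ adj x x) (hmeet : max_cliques_meet_in_at_most_a_vertex adj)
  n f : full (star_adj adj) n f -> (forall t, t < n -> isM (f t) = true) -> redconcl adj n f.
Proof.
  intros Hf HM.
  pose proof (full_ge4 _ _ _ (sadj_sym adj hsym) Hf) as H4.
  pose proof (full_adj _ n f (sadj_sym adj hsym) (sadj_irr adj hirr) Hf) as NA.
  pose proof (full_no2 _ n f (sadj_sym adj hsym) (sadj_irr adj hirr) H4 Hf) as N2.
  destruct Hf as [[_ [Hi Ha]] _].
  set (mt := fun t => match f t with inl _ => fun _ : V => False | inr m => proj1_sig m end).
  set (nx := fun t => if t + 1 =? n then 0 else t + 1).
  assert (Hnx : forall t, t < n -> nxt n t (nx t)) by (intros; unfold nx; gsimp; unfold nxt; lia).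
  assert (Hex : forall t, t < n -> exists y, mt t y /\ mt (nx t) y).
  { intros t Ht. pose proof (Ha t (nx t) Ht (Hnx t Ht)) as A.
    pose proof (HM t Ht) as M1. pose proof (HM (nx t) (nxt_lt _ _ _ (Hnx t Ht))) as M2.
    unfold mt. destruct (f t), (f (nx t)); simpl in *; try discriminate.
    destruct A as [_ [y [Y1 Y2]]]; eauto. }
  destruct (Hex 0 ltac:(lia)) as [y0 _].
  set (x := fun t => epsilon (inhabits y0) (fun y => mt t y /\ mt (nx t) y)).
  assert (Hx : forall t, t < n -> mt t (x t) /\ mt (nx t) (x t)).
  { intros t Ht. apply (epsilon_spec (inhabits y0) (fun y => mt t y /\ mt (nx t) y)). auto. }
  assert (Hmt : forall p q y, p < n -> q < n -> mt p y -> mt q y -> p = q \/ nxt n p q \/ nxt n q p).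
  { intros p q y Hp Hq Y1 Y2. destruct (Nat.eq_dec p q); [auto|right]. apply NA; auto.
    unfold mt in *. destruct (f p) as [v|A] eqn:Fp; [contradiction|].
    destruct (f q) as [v'|B] eqn:Fq; [contradiction|].
    apply (share adj A B y); auto. intros ->. rewrite <- Fp in Fq; apply Hi in Fq; lia. }
  assert (Hcl : forall p a b, p < n -> mt p a -> mt p b -> a <> b -> adj a b).
  { intros p a b Hp. unfold mt. destruct (f p) as [v|A]; [contradiction|].
    apply (proj1 (proj2_sig A)). }
  assert (Htri : forall p y1 y2 z, p < n -> mt p y1 -> mt p y2 -> y1 <> y2 -> adj z y1 ->
                 adj z y2 -> mt p z).
  { intros p y1 y2 z Hp. unfold mt. destruct (f p) as [v|A]; [contradiction|].
    intros; apply (tri adj hsym hmeet _ y1 y2 z (proj2_sig A)); auto. }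
  assert (Hinj : forall a b, a < n -> b < n -> x a = x b -> a = b).
  { intros a b Ha' Hb' E. destruct (Nat.eq_dec a b) as [|Nab]; [auto|exfalso].
    destruct (Hx a Ha') as [Xa1 Xa2]. destruct (Hx b Hb') as [Xb1 Xb2].
    pose proof (Hnx a Ha') as Na. pose proof (Hnx b Hb') as Nb.
    pose proof (nxt_lt _ _ _ Na). pose proof (nxt_lt _ _ _ Nb).
    rewrite E in Xa1, Xa2.
    pose proof (Hmt a b (x b) ltac:(lia) ltac:(lia) Xa1 Xb1).
    pose proof (Hmt a (nx b) (x b) ltac:(lia) ltac:(lia) Xa1 Xb2).
    pose proof (Hmt (nx a) b (x b) ltac:(lia) ltac:(lia) Xa2 Xb1).
    pose proof (Hmt (nx a) (nx b) (x b) ltac:(lia) ltac:(lia) Xa2 Xb2).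
    unfold nxt in *. lia. }
  exists n, (fun t => inl (x t)).
  split; [lia|split; [split; [lia|split]|split]].
  - intros a b Ha' Hb' E. injection E; apply Hinj; auto.
  - intros a b Ha' Hn. simpl.
    assert (Eb : b = nx a) by (pose proof (Hnx a Ha'); unfold nxt in *; lia). subst b.
    apply (Hcl (nx a)); [eapply nxt_lt; eauto|apply Hx; auto|apply Hx; eapply nxt_lt; eauto|].
    intros E. apply Hinj in E; [unfold nxt in *; lia|auto|eapply nxt_lt; eauto].
  - intros a b Ha' Hb' Hd Hc. simpl in Hc.
    set (c := nx a). pose proof (Hnx a Ha') as Nac. fold c in Nac.
    assert (Hc' : c < n) by (eapply nxt_lt; eauto).
    pose proof (Hnx c Hc') as Ncb.
    assert (Eb : b = nx c) by (unfold nxt in *; lia).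
    assert (Xab : mt b (x a)).
    { apply (Htri b (x c) (x b)); auto.
      - rewrite Eb; apply Hx; auto.
      - apply Hx; auto.
      - intros E; apply Hinj in E; auto; unfold nxt in *; lia.
      - apply (Hcl c); [auto|apply Hx; auto|apply Hx; auto|].
        intros E; apply Hinj in E; auto; unfold nxt in *; lia. }
    pose proof (Hmt a b (x a) Ha' Hb' (proj1 (Hx a Ha')) Xab). unfold nxt in *; lia.
  - change (cnt (fun _ => false) n < cnt (fun t => isM (f t)) n). rewrite cnt_false.
    apply (cnt_pos _ n 0); [lia|apply HM; lia].
Qed.

Lemma transition (h : nat -> bool) n a b : a < n -> b < n -> h a = false -> h b = true ->
  exists i j, i < n /\ nxt n i j /\ h i = false /\ h j = true.
Proof.
  intros Ha Hb Fa Tb. apply NNPP; intros N.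
  assert (S1 : forall t, a + t < n -> h (a + t) = false).
  { induction t as [|t IH]; intros Ht; [rewrite Nat.add_0_r; auto|].
    destruct (h (a + S t)) eqn:E; auto. exfalso. apply N. exists (a + t), (a + S t).
    split; [lia|split; [left; lia|split; [apply IH; lia|auto]]]. }
  assert (Hl : h (n - 1) = false) by (replace (n - 1) with (a + (n - 1 - a)) by lia; apply S1; lia).
  assert (H0 : h 0 = false).
  { destruct (h 0) eqn:E; auto. exfalso; apply N. exists (n - 1), 0.
    split; [lia|split; [right; lia|auto]]. }
  assert (S2 : forall t, t < n -> h t = false).
  { induction t as [|t IH]; intros Ht; auto.
    destruct (h (S t)) eqn:E; auto. exfalso. apply N. exists t, (S t).
    split; [lia|split; [left; lia|split; [apply IH; lia|auto]]]. }
  rewrite S2 in Tb; auto; discriminate.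
Qed.

Lemma reduce {V} (adj : V -> V -> Prop) (hsym : forall x y, adj x y -> adj y x)
  (hirr : forall x, ~ adj x x) (hmeet : max_cliques_meet_in_at_most_a_vertex adj)
  n f : full (star_adj adj) n f -> (exists t, t < n /\ isM (f t) = true) -> redconcl adj n f.
Proof.
  intros Hf [b [Hb Tb]].
  destruct (classic (forall t, t < n -> isM (f t) = true)) as [All|NAll].
  - apply allM; auto.
  - apply not_all_ex_not in NAll as [a NA]. apply imply_to_and in NA as [Ha NA].
    apply Bool.not_true_is_false in NA.
    destruct (transition (fun t => isM (f t)) n a b Ha Hb NA Tb) as [i [j (Hi & Hn & Fi & Fj)]].
    pose proof (full_rot _ n f i Hi Hf) as Hf'.
    assert (P0 : pos n i 0 = i) by posl. assert (P1 : pos n i 1 = j) by posl.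
    destruct (f i) as [u|A] eqn:Ei; [|discriminate].
    destruct (f j) as [v|m1] eqn:Ej; [discriminate|].
    destruct (mixed0 adj hsym hirr hmeet n (fun t => f (pos n i t)) u m1 Hf')
      as [n'' [g (H1 & H2 & H3 & H4)]].
    + simpl; rewrite P0; auto.
    + simpl; rewrite P1; auto.
    + exists n'', g. split; auto. split; auto. split; auto.
      rewrite <- (cnt_rot (fun z => isM (f z)) n i Hi). exact H4.
Qed.

Lemma allV {V} (adj : V -> V -> Prop) n (f : nat -> star_vertex adj) :
  full (star_adj adj) n f -> (forall t, t < n -> isM (f t) = false) -> exists h, full adj n h.
Proof.
  intros Hf HV. pose proof Hf as [(H3 & Hi & Ha) Hs].
  assert (Ex : exists v0, f 0 = inl v0).
  { pose proof (HV 0 ltac:(lia)). destruct (f 0); [eauto|discriminate]. }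
  destruct Ex as [v0 _].
  set (h := fun t => match f t with inl v => v | inr _ => v0 end).
  assert (Fh : forall t, t < n -> f t = inl (h t)).
  { intros t Ht. pose proof (HV t Ht). unfold h. destruct (f t); [auto|discriminate]. }
  exists h. split; [split; [auto|split]|].
  - intros a b Ha' Hb' E. apply Hi; auto. rewrite (Fh a), (Fh b), E; auto.
  - intros a b Ha' Hn. pose proof (Ha a b Ha' Hn) as A.
    rewrite (Fh a), (Fh b) in A; auto. eapply nxt_lt; eauto.
  - intros s Hfl Hin.
    destruct (Hs (map inl s)) as [L|[i [j (Hi' & Hn & R)]]].
    + intros x y Hx Hy Hxy. apply in_map_iff in Hx as [x' [<- Hx]].
      apply in_map_iff in Hy as [y' [<- Hy]]. simpl. apply Hfl; auto. congruence.
    + intros x Hx. apply in_map_iff in Hx as [x' [<- Hx]].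
      destruct (Hin x' Hx) as [t [Ht ->]]. exists t. split; auto. symmetry; auto.
    + left. intros x y Hx Hy. assert (inl x = inl y :> star_vertex adj) by (apply L; apply in_map; auto).
      congruence.
    + right. exists i, j. split; auto. split; auto. intros x.
      assert (Hj : j < n) by (eapply nxt_lt; eauto).
      rewrite (Fh i), (Fh j) in R; auto.
      split.
      * intros Hx. destruct (proj1 (R (inl x)) (in_map _ _ _ Hx)) as [E|E]; injection E; auto.
      * intros Hx. assert (In (inl x : star_vertex adj) (map inl s)) as Hm.
        { apply R. destruct Hx as [->| ->]; auto. }
        apply in_map_iff in Hm as [x' [E Hm]]. injection E as ->. auto.
Qed.

Lemma easy {V} (adj : V -> V -> Prop) n f :
  full adj n f -> full (star_adj adj) n (fun t => inl (f t)).
Proof.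
  intros [(H3 & Hi & Ha) Hs]. split; [split; [auto|split]|].
  - intros a b Ha' Hb' E. injection E; apply Hi; auto.
  - intros a b Ha' Hn. simpl. apply Ha; auto.
  - intros s Hfl Hin.
    set (pr := fun z : star_vertex adj => match z with inl v => v | inr _ => f 0 end).
    assert (Hpr : forall z, In z s -> z = inl (pr z)).
    { intros z Hz. destruct (Hin z Hz) as [t [_ ->]]. reflexivity. }
    destruct (Hs (map pr s)) as [L|[i [j (Hi' & Hn & R)]]].
    + intros x y Hx Hy Hxy. apply in_map_iff in Hx as [x' [<- Hx]].
      apply in_map_iff in Hy as [y' [<- Hy]].
      assert (A := Hfl x' y' Hx Hy). rewrite (Hpr x' Hx), (Hpr y' Hy) in A. apply A.
      intros E. apply Hxy. rewrite (Hpr x' Hx), (Hpr y' Hy), E. reflexivity.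
    + intros x Hx. apply in_map_iff in Hx as [x' [<- Hx]].
      destruct (Hin x' Hx) as [t [Ht ->]]. exists t. split; auto.
    + left. intros x y Hx Hy. rewrite (Hpr x Hx), (Hpr y Hy). f_equal. apply L; apply in_map; auto.
    + right. exists i, j. split; auto. split; auto. intros x. split.
      * intros Hx. rewrite (Hpr x Hx). destruct (proj1 (R (pr x)) (in_map _ _ _ Hx)) as [E|E];
        rewrite E; auto.
      * intros Hx. assert (In (f i) (map pr s) /\ In (f j) (map pr s)) as [Mi Mj]
          by (split; apply R; auto).
        destruct Hx as [-> | ->]; [apply in_map_iff in Mi as [z [E Hz]]|apply in_map_iff in Mj as [z [E Hz]]];
        rewrite (Hpr z Hz) in Hz; rewrite E in Hz; auto.
Qed.

Theorem lemma2p7 (V : Type) (adj : V -> V -> Prop) (k : option nat)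
  (hk : le_inf 4 k)
  (hsym : forall x y, adj x y -> adj y x)
  (hirr : forall x, ~ adj x x)
  (hmeet : max_cliques_meet_in_at_most_a_vertex adj) :
  k_large (star_adj adj) k <-> k_large adj k.
Proof.
  split.
  - intros HS n f Hf Hlt. apply (HS n (fun t => inl (f t))); auto.
    apply (proj2 (full_iff _ _ _)). apply easy. apply (proj1 (full_iff _ _ _)). exact Hf.
  - intros HG.
    assert (main : forall m n f, full (star_adj adj) n f -> lt_inf n k ->
              cnt (fun t => isM (f t)) n = m -> False).
    { intros m. induction m as [m IH] using lt_wf_ind. intros n f Hf Hlt Hc.
      destruct (classic (exists t, t < n /\ isM (f t) = true)) as [Ex|Nex].
      - destruct (reduce adj hsym hirr hmeet n f Hf Ex) as [n'' [g (Hle & Hcyc & Hnc & Hcnt)]].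
        destruct (chord_lemma _ n'' g (sadj_sym adj hsym) (sadj_irr adj hirr) Hcyc)
          as [[n' [i (H4' & Hin & Hfull)]]|[a [b (Ha' & Hb' & Hd & Hab)]]].
        + apply (IH (cnt (fun t => isM (g (i + t))) n') ) with n' (fun t => g (i + t)); auto.
          * pose proof (cnt_le_shift (fun t => isM (g t)) i n' n'' Hin). lia.
          * destruct k; simpl in *; lia.
        + exact (Hnc a b Ha' Hb' Hd Hab).
      - destruct (allV adj n f Hf) as [h Hh].
        + intros t Ht. destruct (isM (f t)) eqn:E; auto. exfalso; eauto.
        + apply (HG n h); auto. apply (proj2 (full_iff _ _ _)); auto. }
    intros n f Hf Hlt. apply (main _ n f (proj1 (full_iff _ _ _) Hf) Hlt eq_refl).
Qed.
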